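(* Let $A$ be a JBW algebra, let $C$ be a maximal element of $ASU(A)$, and let $p\in C$ be a projection. Then $\dim U_p(C)=1$ if and only if $\dim U_p(A)=1$.
   Context: A JB algebra is a real Banach algebra $(A,\circ)$ with a commutative product satisfying $a\circ(b\circ a^2)=(a\circ b)\circ a^2$, $\|a^2\|\le\|a^2+b^2\|$, $\|a\|^2=\|a^2\|$; a JBW algebra is a JB algebra that is a dual Banach space (it has a unit $\mathbf{1}$). A projection is an element $p$ with $p\circ p=p$. For $a\in A$, $U_a:A\to A$ is $U_a(b)=2a\circ(a\circ b)-a^2\circ b$. $ASU(A)$ is the set of all norm-closed associative subalgebras of $A$ containing $\mathbf{1}$, ordered by inclusion; a maximal element is one not properly contained in another element of $ASU(A)$. *)

(* Defs.v *)
From HB Require Import structures.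
From mathcomp Require Import all_boot all_order all_algebra.
From mathcomp Require Import all_classical all_reals all_analysis.
Set Implicit Arguments. Unset Strict Implicit. Unset Printing Implicit Defensive.
Import Order.TTheory GRing.Theory Num.Theory.
Import numFieldNormedType.Exports.
Local Open Scope classical_set_scope.
Local Open Scope ring_scope.

Section JB.
Variables (R : realType) (A : completeNormedModType R).
Variables (mul : A -> A -> A) (one : A).

Definition sq (a : A) := mul a a.

Definition is_JB_algebra : Prop :=
  (forall a b c, mul (a + b) c = mul a c + mul b c) /\
  (forall (k : R) a b, mul (k *: a) b = k *: mul a b) /\
  (forall a b, mul a b = mul b a) /\
  (forall a b, `|mul a b| <= `|a| * `|b|) /\
  (forall a b, mul a (mul b (sq a)) = mul (mul a b) (sq a)) /\
  (forall a b, `|sq a| <= `|sq a + sq b|) /\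
  (forall a, `|a| ^+ 2 = `|sq a|).

Definition is_opnorm (X : normedModType R) (f : X -> R) (r : R) : Prop :=
  (forall x : X, `|x| <= 1 -> `|f x| <= r) /\
  (forall e : R, 0 < e -> exists x : X, `|x| <= 1 /\ r - e < `|f x|).

(* A is a dual Banach space: A is isometrically linearly isomorphic to the
   Banach dual X* (bounded linear functionals, operator norm) of some real
   normed space X. *)
Definition is_dual_Banach_space : Prop :=
  exists (X : normedModType R) (T : A -> X -> R),
    [/\ (forall a, (forall x y, T a (x + y) = T a x + T a y) /\
                   (forall (k : R) x, T a (k *: x) = k * T a x) /\
                   continuous (T a)),
        (forall a b x, T (a + b) x = T a x + T b x),
        (forall (k : R) a x, T (k *: a) x = k * T a x),
        (forall f : X -> R, (forall x y, f (x + y) = f x + f y) ->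
                   (forall (k : R) x, f (k *: x) = k * f x) ->
                   continuous f -> exists a, T a = f) &
        (forall a, is_opnorm (T a) `|a|)].

Definition is_JBW_algebra : Prop :=
  [/\ is_JB_algebra, is_dual_Banach_space & (forall a, mul one a = a)].

Definition Uop (a b : A) : A := 2%:R *: mul a (mul a b) - mul (sq a) b.

Definition in_ASU (C : set A) : Prop :=
  closed C /\ C one /\ C 0 /\
  (forall a b, C a -> C b -> C (a + b)) /\
  (forall (k : R) a, C a -> C (k *: a)) /\
  (forall a b, C a -> C b -> C (mul a b)) /\
  (forall a b c, C a -> C b -> C c -> mul (mul a b) c = mul a (mul b c)).

Definition maximal_ASU (C : set A) : Prop :=
  in_ASU C /\ (forall D : set A, in_ASU D -> C `<=` D -> D = C).

Definition dim1 (S : set A) : Prop :=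
  exists v, [/\ S v, v != 0 & forall w, S w -> exists k : R, w = k *: v].

End JB.

(* Main.v *)
Require Import Defs.
From HB Require Import structures.
From mathcomp Require Import all_boot all_order all_algebra.
From mathcomp Require Import all_classical all_reals all_analysis.
From mathcomp Require Import ring lra.
Set Implicit Arguments. Unset Strict Implicit. Unset Printing Implicit Defensive.
Import Order.TTheory GRing.Theory Num.Theory.
Import numFieldNormedType.Exports.
Local Open Scope classical_set_scope.
Local Open Scope ring_scope.
Import GRing.Theory.
Local Open Scope ring_scope.

Section Lin.
Variables (R : comNzRingType) (V : lmodType R).
Inductive lexpr := LAt of nat | L0 | LAdd of lexpr & lexpr | LOpp of lexpr
  | LScl of R & lexpr.
Fixpoint ev (env : seq V) (e : lexpr) : V :=
  match e with LAt j => nth 0 env j | L0 => 0 | LAdd a b => ev env a + ev env b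
  | LOpp a => - ev env a | LScl k a => k *: ev env a end.
Fixpoint cf (e : lexpr) (i : nat) : R :=
  match e with LAt j => (i == j)%:R | L0 => 0 | LAdd a b => cf a i + cf b i
  | LOpp a => - cf a i | LScl k a => k * cf a i end.
Lemma evE env e : ev env e = \sum_(i < size env) cf e i *: nth 0 env i.
Proof.
elim: e => [j||a IHa b IHb|a IHa|k a IHa] /=.
- have [jlt|jge] := ltnP j (size env).
    rewrite (bigD1 (Ordinal jlt)) //= eqxx scale1r big1 ?addr0 //.
    move=> i ne; rewrite (_ : (i == j :> nat) = false) ?scale0r //.
    by apply/negbTE; apply: contra ne => /eqP h; apply/eqP/val_inj.
  rewrite nth_default // big1 // => i _.
  by rewrite (_ : (i == j :> nat) = false) ?scale0r //; apply/negbTE;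
     rewrite neq_ltn (leq_trans (ltn_ord i) jge).
- by rewrite big1 // => i _; rewrite scale0r.
- by rewrite IHa IHb -big_split; apply: eq_bigr => i _; rewrite scalerDl.
- by rewrite IHa -sumrN; apply: eq_bigr => i _; rewrite scaleNr.
- by rewrite IHa scaler_sumr; apply: eq_bigr => i _; rewrite scalerA.
Qed.
Lemma ev_eq env e1 e2 :
  (forall i, (i < size env)%N -> cf e1 i = cf e2 i) -> ev env e1 = ev env e2.
Proof. by move=> h; rewrite !evE; apply: eq_bigr => i _; rewrite h. Qed.
End Lin.

Ltac lidx env t :=
  lazymatch env with
  | (t :: _) => constr:(O)
  | (_ :: ?r) => let n := lidx r t in constr:(S n)
  end.
Ltac reify R env t :=
  lazymatch t with
  | 0 => constr:(@L0 R)
  | GRing.zero _ => constr:(@L0 R)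
  | ?a + ?b => let x := reify R env a in let y := reify R env b in constr:(LAdd x y)
  | - ?a => let x := reify R env a in constr:(LOpp x)
  | ?k *: ?a => let x := reify R env a in constr:(LScl k x)
  | _ => let n := lidx env t in constr:(@LAt R n)
  end.
Ltac lgo i := first [ by [] | case: i => [|i]; [ by move=> _ /=; ring | lgo i ] ].
Ltac linsolve R env :=
  rewrite ?mulr2n;
  lazymatch goal with |- ?l = ?r =>
    let el := reify R env l in let er := reify R env r in
    change (ev env el = ev env er); apply: ev_eq;
    let i := fresh "i" in move=> i; lgo i
  end.


Section Alg.
Variables (R : realType) (A : completeNormedModType R) (mul : A -> A -> A).
Hypothesis HJ : is_JB_algebra mul.
Local Notation m := mul.

Lemma mulDl a b c : m (a + b) c = m a c + m b c. Proof. by case: HJ => ->. Qed.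
Lemma mulZl (k : R) a b : m (k *: a) b = k *: m a b. Proof. by case: HJ => _ [] ->. Qed.
Lemma mulC a b : m a b = m b a. Proof. by case: HJ => _ [] _ [] ->. Qed.
Lemma mulDr a b c : m c (a + b) = m c a + m c b. Proof. by rewrite !(mulC c) mulDl. Qed.
Lemma mulZr (k : R) a b : m b (k *: a) = k *: m b a. Proof. by rewrite !(mulC b) mulZl. Qed.
Lemma mul0l a : m 0 a = 0. Proof. by have := mulZl 0 0 a; rewrite !scale0r. Qed.
Lemma mul0r a : m a 0 = 0. Proof. by rewrite mulC mul0l. Qed.
Lemma mulNl a b : m (- a) b = - m a b. Proof. by rewrite -scaleN1r mulZl scaleN1r. Qed.
Lemma mulNr a b : m b (- a) = - m b a. Proof. by rewrite !(mulC b) mulNl. Qed.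
Lemma mulBl a b c : m (a - b) c = m a c - m b c. Proof. by rewrite mulDl mulNl. Qed.
Lemma mulBr a b c : m c (a - b) = m c a - m c b. Proof. by rewrite mulDr mulNr. Qed.
Lemma jordan a b : m a (m b (m a a)) = m (m a b) (m a a).
Proof. by case: HJ => _ [] _ [] _ [] _ [] + _ => /(_ a b). Qed.

Definition T b x y z := m x (m b (m y z)) - m (m x b) (m y z).
Lemma TD1 b x x' y z : T b (x + x') y z = T b x y z + T b x' y z.
Proof. rewrite /T !mulDl; linsolve R [:: m x (m b (m y z)); m x' (m b (m y z)); m (m x b) (m y z); m (m x' b) (m y z)]. Qed.
Lemma TD2 b x y y' z : T b x (y + y') z = T b x y z + T b x y' z.
Proof. rewrite /T !mulDl !mulDr; linsolve R [:: m x (m b (m y z)); m x (m b (m y' z)); m (m x b) (m y z); m (m x b) (m y' z)]. Qed.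
Lemma TC b x y z : T b x y z = T b x z y.
Proof. by rewrite /T (mulC y). Qed.
Lemma TD3 b x y z z' : T b x y (z + z') = T b x y z + T b x y z'.
Proof. by rewrite TC TD2 !(TC _ _ y). Qed.
Lemma TN1 b x y z : T b (- x) y z = - T b x y z.
Proof. rewrite /T !mulNl; linsolve R [:: m x (m b (m y z)); m (m x b) (m y z)]. Qed.
Lemma TN2 b x y z : T b x (- y) z = - T b x y z.
Proof. rewrite /T !mulNl !mulNr; linsolve R [:: m x (m b (m y z)); m (m x b) (m y z)]. Qed.
Lemma TN3 b x y z : T b x y (- z) = - T b x y z.
Proof. by rewrite TC TN2 TC. Qed.
Lemma T0 b a : T b a a a = 0.
Proof. by rewrite /T jordan subrr. Qed.

Lemma lin b a c : T b c a a + T b a a c + T b a a c = 0.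
Proof.
have e1 := T0 b (a + c).
have e2 := T0 b (a + - c).
rewrite !(TD1, TD2, TD3) !(TC b a c a) !(TC b c c a) !T0 in e1.
rewrite !(TD1, TD2, TD3, TN1, TN2, TN3) !opprK !(TC b a c a) !(TC b c c a) !T0 in e2.
have : (T b c a a + T b a a c + T b a a c) *+ 2 = 0.
  have := congr2 (fun u v => u - v) e1 e2; rewrite /= subrr => <-.
  linsolve R [:: T b a a c; T b a c c; T b c a a; T b c a c].
move/eqP; rewrite -scaler_nat scaler_eq0 pnatr_eq0 /= => /eqP //.
Qed.

Lemma lin_from (x y h : A) : x - y = h -> h = 0 -> x = y.
Proof. by move=> e h0; apply/eqP; rewrite -subr_eq0 e h0. Qed.
Lemma lin_fromk (k : R) (x y h : A) : x - y = k *: h -> h = 0 -> x = y.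
Proof. by move=> e h0; apply/eqP; rewrite -subr_eq0 e h0 scaler0. Qed.

Section Peirce.
Variables (p : A).
Hypothesis Hp : m p p = p.

Lemma U_A1 x : m p (Uop mul p x) = Uop mul p x.
Proof.
have h := lin p p x.
rewrite /T !Hp (mulC x p) (mulC (m p x) p) in h.
rewrite /Uop /sq Hp mulBr mulZr.
apply: (lin_from _ h).
linsolve R [:: m p x; m p (m p x); m p (m p (m p x))].
Qed.

Lemma U_id x : m p x = x -> Uop mul p x = x.
Proof. move=> hx; rewrite /Uop /sq Hp !hx; linsolve R [:: x]. Qed.

Lemma A10 x y : m p x = x -> m p y = 0 -> m x y = 0.
Proof.
move=> hx hy.
have h1 := lin x p y.
rewrite /T !Hp hy !mul0r (mulC x p) hx ?mul0l ?subrr ?addr0 in h1.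
have h2 := lin y p x.
rewrite /T !Hp hx (mulC y p) hy !mul0r ?mul0l ?subr0 ?sub0r in h2.
rewrite (mulC (m x y) p) (mulC y x) in h2.
rewrite (mulC (m y x) p) (mulC y x) in h1.
have e1 : m p (m x y) = 0.
  apply: (lin_from _ h2); linsolve R [:: m p (m x y)].
by move/subr0_eq: h1; rewrite e1.
Qed.

Lemma A11 x z : m p x = x -> m p z = z -> m p (m x z) = m x z.
Proof.
move=> hx hz.
have h := lin x p z.
rewrite /T !Hp hz (mulC x p) hx (mulC z x) (mulC (m x z) p) in h.
apply: (lin_from _ h); linsolve R [:: m x z; m p (m x z)].
Qed.

Lemma A00 x z : m p x = 0 -> m p z = 0 -> m p (m x z) = 0.
Proof.
move=> hx hz.
have h := lin x p z.
rewrite /T !Hp hz (mulC x p) hx !mul0r ?mul0l (mulC z x) (mulC (m x z) p) in h.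
apply: (@lin_fromk (-1) _ _ _ _ h); linsolve R [:: m p (m x z)].
Qed.
End Peirce.

Section Power.
Variable a : A.
Fixpoint pw1 n := if n is n'.+1 then m a (pw1 n') else a.

Lemma jc c : m a (m (m a a) c) = m (m a a) (m a c).
Proof. by have := jordan a c; rewrite (mulC c) (mulC (m a c)). Qed.

Lemma sq_pow n : m (m a a) (pw1 n) = pw1 n.+2.
Proof.
elim: n => [|n IH] /=; first by rewrite mulC.
by rewrite -jc IH.
Qed.

Lemma Lrec n c : m (pw1 n.+2) c = m (m a a) (m (pw1 n) c)
  + 2%:R *: m (pw1 n.+1) (m a c) - 2%:R *: m a (m (pw1 n) (m a c)).
Proof.
have h := lin (pw1 n) a c.
rewrite /T (mulC (pw1 n) (m a a)) sq_pow (mulC c (pw1 n.+2)) in h.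
rewrite (mulC (m c (pw1 n))) (mulC c (pw1 n)) in h.
rewrite (_ : m a (pw1 n) = pw1 n.+1) // in h.
apply: (lin_from _ h).
linsolve R [:: m (pw1 n.+2) c; m (m a a) (m (pw1 n) c); m (pw1 n.+1) (m a c);
   m a (m (pw1 n) (m a c))].
Qed.

Definition CM k : Prop := (forall c, m (pw1 k) (m a c) = m a (m (pw1 k) c)) /\
  (forall c, m (pw1 k) (m (m a a) c) = m (m a a) (m (pw1 k) c)).

Lemma CM_all n : CM n.
Proof.
suff : CM n /\ CM n.+1 by case.
elim: n => [|n [[I1 I2] [J1 J2]]].
  split; split => c //=; by rewrite jc.
split; first by split.
split => c.
- rewrite !Lrec !(mulDr, mulNr, mulZr).
  by rewrite !I1 !J1 -!jc.
- rewrite !Lrec !(mulDr, mulNr, mulZr).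
  by rewrite !jc !I2 !J2 !jc.
Qed.

Lemma pow_mul i j : m (pw1 i) (pw1 j) = pw1 (i + j).+1.
Proof.
elim: j => [|j IH]; first by rewrite addn0 /= mulC.
by rewrite /= (CM_all i).1 IH addnS.
Qed.
End Power.
Lemma lip_cont (f : A -> A) (K : R) : 0 <= K ->
  (forall x y, `|f x - f y| <= K * `|x - y|) -> continuous f.
Proof.
move=> K0 h x; apply/cvgrPdist_lt => e e0.
have d0 : 0 < e / (K + 1) by rewrite divr_gt0 // ltr_wpDl.
near=> y.
have hy : `|x - y| < e / (K + 1) by near: y; apply: (@cvgr_dist_lt _ _ _ (nbhs x) _ (fun y => y) x (@cvg_id _ (nbhs x))).
rewrite ltr_pdivlMr ?ltr_wpDl // in hy.
have := h x y.
have : 0 <= `|x - y| by [].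
nra.
Unshelve. all: by end_near.
Qed.

Lemma cl_map (f : A -> A) (S K : set A) : continuous f -> closed K ->
  (forall x, S x -> K (f x)) -> forall x, closure S x -> K (f x).
Proof.
move=> fc Kc hS x; rewrite closureE => /(_ (f @^-1` K)); apply; split.
  exact: (continuous_closedP f).1 fc _ Kc.
exact: hS.
Qed.

Lemma closed0 : closed [set (0 : A)].
Proof. exact/accessible_closed_set1/hausdorff_accessible/norm_hausdorff. Qed.

Lemma mul_norm a b : `|m a b| <= `|a| * `|b|.
Proof. by case: HJ => _ [] _ [] _ [] + _ => /(_ a b). Qed.

Lemma lin_cont (h : A -> A) (K : R) : 0 <= K ->
  (forall x y, h x - h y = h (x - y)) -> (forall u, `|h u| <= K * `|u|) ->
  continuous h.
Proof. by move=> K0 hl hb; apply: (lip_cont K0) => x y; rewrite hl. Qed.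

Lemma cont_mull c : continuous (fun x => m x c).
Proof.
apply: (@lin_cont _ `|c|) => // [x y|u]; first by rewrite mulBl.
by rewrite mulrC mul_norm.
Qed.
Lemma cont_mulr c : continuous (fun x => m c x).
Proof.
apply: (@lin_cont _ `|c|) => // [x y|u]; first by rewrite mulBr.
by rewrite mul_norm.
Qed.
Lemma cont_addl (c : A) : continuous (fun x : A => x + c).
Proof.
apply: (@lip_cont _ 1) => // x y; rewrite mul1r.
by rewrite opprD addrACA subrr addr0.
Qed.
Lemma cont_addr (c : A) : continuous (fun x : A => c + x).
Proof. by under eq_fun do rewrite addrC; exact: cont_addl. Qed.
Lemma cont_scale (k : R) : continuous (fun x : A => k *: x).
Proof.
apply: (@lin_cont _ `|k|) => // [x y|u]; first by rewrite scalerBr.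
by rewrite normrZ.
Qed.

Lemma cl_bin (op : A -> A -> A) (S : set A) : (forall x, continuous (op x)) ->
  (forall y, continuous (op^~ y)) -> (forall x y, S x -> S y -> S (op x y)) ->
  forall x y, closure S x -> closure S y -> closure S (op x y).
Proof.
move=> c1 c2 hS.
have st1 x y : S x -> closure S y -> closure S (op x y).
  move=> Sx; apply: (cl_map (c1 x) (@closed_closure _ S)) => z Sz.
  exact/subset_closure/hS.
move=> x y cx cy.
apply: (cl_map (c2 y) (@closed_closure _ S) _ cx) => z Sz.
exact: st1.
Qed.

Lemma cl_eq (h : A -> A) (S : set A) : continuous h ->
  (forall x, S x -> h x = 0) -> forall x, closure S x -> h x = 0.
Proof. by move=> hc hS x cx; apply: (cl_map hc closed0 hS cx). Qed.

Inductive span (G : set A) : A -> Prop :=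
| sp_gen g : G g -> span G g
| sp0 : span G 0
| spD x y : span G x -> span G y -> span G (x + y)
| spZ (k : R) x : span G x -> span G (k *: x).

Lemma span_mul G : (forall g1 g2, G g1 -> G g2 -> span G (m g1 g2)) ->
  forall x y, span G x -> span G y -> span G (m x y).
Proof.
move=> hG x y sx; elim: sx y => [g Gg||x1 x2 _ IH1 _ IH2|k x1 s1 IH1] y sy.
- elim: sy => [g' Gg'||y1 y2 _ IH1 _ IH2|k y1 _ IH1].
  + exact: hG.
  + by rewrite mul0r; exact: sp0.
  + by rewrite mulDr; exact: spD.
  + by rewrite mulZr; exact: spZ.
- by rewrite mul0l; exact: sp0.
- by rewrite mulDl; apply: spD; [exact: IH1|exact: IH2].
- by rewrite mulZl; apply: spZ; exact: IH1.
Qed.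

Definition assoc3 x y z := m (m x y) z = m x (m y z).

Lemma span_assoc G : (forall g1 g2 g3, G g1 -> G g2 -> G g3 -> assoc3 g1 g2 g3) ->
  forall x y z, span G x -> span G y -> span G z -> assoc3 x y z.
Proof.
rewrite /assoc3 => hG.
have L1 x y z : G x -> G y -> span G z -> m (m x y) z = m x (m y z).
  move=> Gx Gy; elim => [g Gg||z1 z2 _ IH1 _ IH2|k z1 _ IH1].
  - exact: hG.
  - by rewrite !mul0r.
  - by rewrite !mulDr IH1 IH2.
  - by rewrite !mulZr IH1.
have L2 x y z : G x -> span G y -> span G z -> m (m x y) z = m x (m y z).
  move=> Gx sy sz; elim: sy => [g Gg||y1 y2 _ IH1 _ IH2|k y1 _ IH1].
  - exact: L1.
  - by rewrite mul0r !mul0l mul0r.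
  - by rewrite mulDr !mulDl mulDr IH1 IH2.
  - by rewrite mulZr !mulZl mulZr IH1.
move=> x y z sx sy sz; elim: sx => [g Gg||x1 x2 _ IH1 _ IH2|k x1 _ IH1].
- exact: L2.
- by rewrite !mul0l.
- by rewrite !mulDl IH1 IH2.
- by rewrite !mulZl IH1.
Qed.

Lemma lin3 (h : A -> A) (K : R) : 0 <= K ->
  (forall x y, h x - h y = h (x - y)) -> (forall u, `|h u| <= K * `|u|) ->
  forall S, (forall x, S x -> h x = 0) -> forall x, closure S x -> h x = 0.
Proof. by move=> K0 hl hb S; apply: cl_eq; exact: lin_cont hl hb. Qed.

Lemma nB (a b : A) (K1 K2 u : R) : `|a| <= K1 * u -> `|b| <= K2 * u ->
  `|a - b| <= (K1 + K2) * u.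
Proof.
move=> h1 h2; apply: (le_trans (ler_normB _ _)); rewrite mulrDl; exact: lerD.
Qed.

Lemma le_eq (a b c : R) : a <= b -> b = c -> a <= c.
Proof. by move=> h <-. Qed.
Lemma nb2 a b c : `|m (m a b) c| <= `|a| * `|b| * `|c|.
Proof.
apply: (le_trans (mul_norm _ _)); apply: ler_wpM2r => //; exact: mul_norm.
Qed.
Lemma nb2' a b c : `|m a (m b c)| <= `|a| * `|b| * `|c|.
Proof.
apply: (le_trans (mul_norm _ _)); rewrite -mulrA; apply: ler_wpM2l => //.
exact: mul_norm.
Qed.
Lemma cl_assoc S : (forall x y z, S x -> S y -> S z -> assoc3 x y z) ->
  forall x y z, closure S x -> closure S y -> closure S z -> assoc3 x y z.
Proof.
rewrite /assoc3 => hS.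
have st1 y z : S y -> S z -> forall x, closure S x -> m (m x y) z = m x (m y z).
  move=> Sy Sz x cx; apply/eqP; rewrite -subr_eq0; apply/eqP; move: x cx.
  apply: (@lin3 (fun x => m (m x y) z - m x (m y z)) (`|y| * `|z| + `|m y z|)) => //.
  - move=> x x'; rewrite !mulBl; linsolve R [:: m (m x y) z; m (m x' y) z; m x (m y z); m x' (m y z)].
  - move=> u; apply: nB.
      by apply: (le_eq (nb2 u y z)); ring.
    by apply: (le_eq (mul_norm u _)); ring.
  - move=> x Sx; apply/eqP; rewrite subr_eq0; apply/eqP; exact: hS.
have st2 z : S z -> forall x y, closure S x -> closure S y -> m (m x y) z = m x (m y z).
  move=> Sz x y cx cy; apply/eqP; rewrite -subr_eq0; apply/eqP; move: y cy.
  apply: (@lin3 (fun y => m (m x y) z - m x (m y z)) (`|x| * `|z| + `|x| * `|z|)) => //.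
  - move=> y y'; rewrite !mulBl !mulBr !mulBl; linsolve R [:: m (m x y) z; m (m x y') z; m x (m y z); m x (m y' z)].
  - move=> u; apply: nB.
      by apply: (le_eq (nb2 x u z)); ring.
    by apply: (le_eq (nb2' x u z)); ring.
  - move=> y Sy; apply/eqP; rewrite subr_eq0; apply/eqP; exact: st1.
move=> x y z cx cy cz; apply/eqP; rewrite -subr_eq0; apply/eqP; move: z cz.
apply: (@lin3 (fun z => m (m x y) z - m x (m y z)) (`|m x y| + `|x| * `|y|)) => //.
- move=> z z'; rewrite !mulBr; linsolve R [:: m (m x y) z; m (m x y) z'; m x (m y z); m x (m y z')].
- move=> u; apply: nB; first exact: mul_norm.
  by apply: (le_eq (nb2' x y u)); ring.
- move=> z Sz; apply/eqP; rewrite subr_eq0; apply/eqP; exact: st2.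
Qed.

Lemma z01 p x y : m p p = p -> m p x = 0 -> m p y = y -> m x y = 0.
Proof. by move=> Hp hx hy; rewrite mulC; exact: (A10 Hp). Qed.

Lemma Uop0 x : Uop mul 0 x = 0.
Proof. by rewrite /Uop /sq !mul0l ?mul0r scaler0 subr0. Qed.

Lemma rescale (v p w : A) (k0 k : R) : p != 0 -> p = k0 *: v -> w = k *: v ->
  exists k', w = k' *: p.
Proof.
move=> pn0 pk wk; have k0n0 : k0 != 0.
  by apply: contraNneq pn0 => k0z; rewrite pk k0z scale0r.
by exists (k / k0); rewrite wk pk scalerA divfK.
Qed.

Lemma forward (one : A) (C : set A) (p : A) : maximal_ASU mul one C -> C p ->
  m p p = p -> dim1 (Uop mul p @` C) -> dim1 (Uop mul p @` setT).
Proof.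
move=> [[Ccl [C1 [C0 [CD [CZ [CM CA]]]]]] Cmax] Cp Hp [v [[c0 Cc0 vE] vn0 Hdim]].
have ppc c : C c -> m p (m p c) = m p c by move=> Cc; rewrite -CA // Hp.
have UC c : C c -> Uop mul p c = m p c.
  by move=> Cc; rewrite /Uop /sq Hp ppc //; linsolve R [:: m p c].
have pn0 : p != 0.
  by apply: contraNneq vn0 => p0; rewrite -vE p0 Uop0.
have [k0 pk0] : exists k, p = k *: v.
  by apply: Hdim; exists p => //; rewrite UC // Hp.
have inp c : C c -> exists k', m p c = k' *: p.
  move=> Cc; have [k hk] : exists k, m p c = k *: v.
    by apply: Hdim; exists c => //; rewrite UC.
  exact: (rescale pn0 pk0 hk).
exists v; split => //; first by exists c0.
move=> _ [a _ <-].
set b := Uop mul p a.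
have hb1 : m p b = b := U_A1 Hp a.
pose pw n := if n is n'.+1 then pw1 b n' else p.
have pwA1 n : m p (pw n) = pw n.
  case: n => [|n] //=; elim: n => [|n IH] //=; exact: A11.
have pw_mul i j : m (pw i) (pw j) = pw (i + j)%N.
  case: i => [|i]; first by rewrite pwA1.
  case: j => [|j]; first by rewrite mulC pwA1 addn0.
  by rewrite /= pow_mul addnS.
pose G := fun g => (C g /\ m p g = 0) \/ exists n, g = pw n.
have Gmul g1 g2 : G g1 -> G g2 -> span G (m g1 g2).
  move=> [[C1' Z1]|[i ->]] [[C2' Z2]|[j ->]].
  - by apply: sp_gen; left; split; [exact: CM | exact: A00].
  - by rewrite (z01 Hp Z1 (pwA1 j)); exact: sp0.
  - by rewrite (A10 Hp (pwA1 i) Z2); exact: sp0.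
  - by rewrite pw_mul; apply: sp_gen; right; exists (i + j).
have Gassoc g1 g2 g3 : G g1 -> G g2 -> G g3 -> assoc3 g1 g2 g3.
  rewrite /assoc3.
  move=> [[C1' Z1]|[i ->]] [[C2' Z2]|[j ->]] [[C3' Z3]|[k ->]].
  - exact: CA.
  - by rewrite (z01 Hp (A00 Hp Z1 Z2) (pwA1 k)) (z01 Hp Z2 (pwA1 k)) mul0r.
  - by rewrite (z01 Hp Z1 (pwA1 j)) (A10 Hp (pwA1 j) Z3) mul0l mul0r.
  - by rewrite (z01 Hp Z1 (pwA1 j)) pw_mul (z01 Hp Z1 (pwA1 _)) mul0l.
  - by rewrite (A10 Hp (pwA1 i) Z2) (A10 Hp (pwA1 i) (A00 Hp Z2 Z3)) mul0l.
  - by rewrite (A10 Hp (pwA1 i) Z2) (z01 Hp Z2 (pwA1 k)) mul0l mul0r.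
  - by rewrite pw_mul (A10 Hp (pwA1 _) Z3) (A10 Hp (pwA1 j) Z3) mul0r.
  - by rewrite !pw_mul addnA.
pose D := closure (span G).
have Csub : C `<=` D.
  move=> c Cc; apply: subset_closure.
  have -> : c = (c - m p c) + m p c by rewrite subrK.
  apply: spD.
    apply: sp_gen; left; split.
      by apply: CD => //; rewrite -scaleN1r; apply: CZ; exact: CM.
    by rewrite mulBr ppc // subrr.
  have [k' ->] := inp c Cc; apply: spZ; apply: sp_gen; right; by exists 0%N.
have inD : in_ASU mul one D.
  split; first exact: closed_closure.
  split; first exact: Csub.
  split; first exact/subset_closure/sp0.
  split.
    apply: (@cl_bin +%R) => [x|y|x y sx sy]; [exact: cont_addr|exact: cont_addl|exact: spD].
  split.
    move=> k; rewrite /D; apply: (cl_map (@cont_scale k) (@closed_closure _ (span G))) => y sy.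
    exact/subset_closure/spZ.
  split.
    apply: cl_bin => [x|y|x y sx sy]; [exact: cont_mulr|exact: cont_mull|].
    exact: span_mul.
  apply: cl_assoc; exact: span_assoc.
have Cb : C b.
  rewrite -(Cmax D inD Csub); apply/subset_closure/sp_gen; right; by exists 1%N.
apply: Hdim; exists b => //; exact: U_id.
Qed.

Lemma backward (one : A) (C : set A) (p : A) : C p ->
  m p p = p -> dim1 (Uop mul p @` setT) -> dim1 (Uop mul p @` C).
Proof.
move=> Cp Hp [v [[a0 _ vE] vn0 Hdim]].
have pn0 : p != 0.
  by apply: contraNneq vn0 => p0; rewrite -vE p0 Uop0.
have [k0 pk0] : exists k, p = k *: v.
  by apply: Hdim; exists p => //; exact: U_id.
exists p; split => //; first by exists p => //; exact: U_id.
move=> _ [c Cc <-].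
have [k hk] := Hdim (Uop mul p c) (ex_intro2 _ _ c I erefl).
exact: (rescale pn0 pk0 hk).
Qed.
End Alg.

Local Close Scope ring_scope.

Theorem lemma2p4 (R : realType) (A : completeNormedModType R)
    (mul : A -> A -> A) (one : A) (C : set A) (p : A) :
  is_JBW_algebra mul one ->
  maximal_ASU mul one C ->
  C p -> mul p p = p ->
  (dim1 (Uop mul p @` C) <-> dim1 (Uop mul p @` setT)).
Proof.
move=> [HJ _ _] Hmax Cp Hp; split.
  exact: (forward HJ Hmax Cp Hp).
exact: (backward HJ one Cp Hp).
Qed.
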